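(* Let $\mathcal{A}$ be a finite abelian group with $|\mathcal{A}|\ge 3$. Let $M_5(p_1,p_2)$ be the graph consisting of the $5$-cycle $v_1v_2v_3v_4v_5v_1$ with the chord $v_3v_5$, together with $p_1\ge 0$ pendant vertices adjacent to $v_1$ and $p_2\ge0$ pendant vertices adjacent to $v_2$, where $(p_1,p_2)\neq(0,0)$. Then $M_5(p_1,p_2)$ is $\mathcal{A}$-vertex magic if and only if $p_1\ge1$, $p_2\ge 1$, and $\mathcal{A}$ contains a square element.
   Context: An element $g\in\mathcal{A}$ is a square if $g\neq 0$ and $g=2h$ for some $h\in\mathcal{A}$. A map $\ell:V(G)\to\mathcal{A}\setminus\{0\}$ is an $\mathcal{A}$-vertex magic labeling if there is $\mu\in\mathcal{A}$ with $\sum_{u\in N(v)}\ell(u)=\mu$ for every vertex $v$; $G$ is $\mathcal{A}$-vertex magic if such a labeling exists. A pendant vertex has degree $1$. *)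

(* Defs.v *)
From mathcomp Require Import all_boot all_order all_algebra.
Set Implicit Arguments. Unset Strict Implicit. Unset Printing Implicit Defensive.
Import GRing.Theory.
Local Open Scope ring_scope.

Definition is_square (A : zmodType) (g : A) : Prop :=
  g != 0 /\ exists h : A, g = h *+ 2.

Definition vertex_magic_labeling (A : zmodType) (V : finType) (adj : rel V)
    (l : V -> A) : Prop :=
  (forall v, l v != 0) /\
  exists mu : A, forall v : V, \sum_(u | adj v u) l u = mu.

Definition vertex_magic (A : zmodType) (V : finType) (adj : rel V) : Prop :=
  exists l : V -> A, vertex_magic_labeling adj l.

(* The graph M_5(p1,p2).  Vertices: inl i (i : 'I_5) is v_{i+1};
   inr (inl k) are the p1 pendant vertices attached to v_1;
   inr (inr k) are the p2 pendant vertices attached to v_2. *)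
Definition M5V (p1 p2 : nat) : finType := ('I_5 + ('I_p1 + 'I_p2))%type.

Definition core_adj (i j : 'I_5) : bool :=
  ((i.+1 %% 5)%N == j) || ((j.+1 %% 5)%N == i)
  || ((i == 2 :> nat) && (j == 4 :> nat)) || ((i == 4 :> nat) && (j == 2 :> nat)).

Definition M5adj (p1 p2 : nat) : rel (M5V p1 p2) :=
  fun x y =>
    match x, y with
    | inl i, inl j => core_adj i j
    | inl i, inr (inl _) => i == 0 :> nat
    | inr (inl _), inl j => j == 0 :> nat
    | inl i, inr (inr _) => i == 1 :> nat
    | inr (inr _), inl j => j == 1 :> nat
    | inr _, inr _ => false
    end.

(* Main.v *)
Require Import Defs.
From mathcomp Require Import all_boot all_order all_algebra.
From mathcomp Require Import zify.
Local Open Scope ring_scope.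
Import GRing.Theory.

Definition o0 : 'I_5 := @Ordinal 5 0 isT.
Definition o1 : 'I_5 := @Ordinal 5 1 isT.
Definition o2 : 'I_5 := @Ordinal 5 2 isT.
Definition o3 : 'I_5 := @Ordinal 5 3 isT.
Definition o4 : 'I_5 := @Ordinal 5 4 isT.

Lemma sum5 (A : zmodType) (F : 'I_5 -> A) :
  \sum_j F j = F o0 + F o1 + F o2 + F o3 + F o4.
Proof.
rewrite !big_ord_recl big_ord0 addr0 !addrA.
by congr (_ + _ + _ + _ + _); congr F; apply: val_inj.
Qed.

Lemma ord5_cases (i : 'I_5) : i = o0 \/ i = o1 \/ i = o2 \/ i = o3 \/ i = o4.
Proof.
case: i => [[|[|[|[|[|n]]]]] Hi];
  [left|right;left|right;right;left|right;right;right;left|right;right;right;right|done];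
  exact: val_inj.
Qed.

Ltac simp5 := rewrite big_sumType /= big_sumType /= big_mkcond sum5 /=
  ?(big_mkcond (fun i => _ == _)) /= ?big1_eq ?addr0 ?add0r ?addr0 ?add0r ?addr0 ?add0r.

Section S.
Variables (A : zmodType) (p1 p2 : nat) (l : M5V p1 p2 -> A).
Lemma s0 : \sum_(u | M5adj (inl o0) u) l u = l (inl o1) + l (inl o4) + \sum_k l (inr (inl k)).
Proof. by simp5. Qed.
Lemma s1 : \sum_(u | M5adj (inl o1) u) l u = l (inl o0) + l (inl o2) + \sum_k l (inr (inr k)).
Proof. by simp5. Qed.
Lemma s2 : \sum_(u | M5adj (inl o2) u) l u = l (inl o1) + l (inl o3) + l (inl o4).
Proof. by simp5. Qed.
Lemma s3 : \sum_(u | M5adj (inl o3) u) l u = l (inl o2) + l (inl o4).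
Proof. by simp5. Qed.
Lemma s4 : \sum_(u | M5adj (inl o4) u) l u = l (inl o0) + l (inl o2) + l (inl o3).
Proof. by simp5. Qed.
Lemma sp1 k : \sum_(u | M5adj (inr (inl k)) u) l u = l (inl o0).
Proof. by simp5; rewrite !big_pred0_eq add0r addr0. Qed.
Lemma sp2 k : \sum_(u | M5adj (inr (inr k)) u) l u = l (inl o1).
Proof. by simp5; rewrite !big_pred0_eq add0r addr0. Qed.
End S.

Lemma decomp (A : finZmodType) : (3 <= #|A|)%N -> forall n (x : A), x != 0 ->
  exists f : 'I_n.+1 -> A, (forall k, f k != 0) /\ \sum_k f k = x.
Proof.
move=> HA; elim=> [|n IH] x x0.
  by exists (fun _ => x); split => // ; rewrite big_ord1.
have : (0 < #|[predC [set 0%R; x]]|)%N.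
  have := cardC [set 0%R; x]; rewrite cards2 => E.
  have E' : ((0%R != x).+1 + #|[predC [set 0%R; x]]|)%N = #|A| by exact: E.
  move: E' HA; case: (_ != _) => /=; lia.
case/card_gt0P => y; rewrite !inE negb_or => /andP [y0 yx].
have xy0 : x - y != 0 by rewrite subr_eq0 eq_sym.
have [f [fnz fs]] := IH _ xy0.
exists (fun k : 'I_n.+2 => if (val k < n.+1)%N then f (inord k) else y).
split.
  by move=> k; case: ifP.
rewrite big_ord_recr /= ltnn.
under eq_bigr => k _ do rewrite /= ltn_ord inord_val.
by rewrite fs subrK.
Qed.

Theorem proposition4p5 (A : finZmodType) (p1 p2 : nat) :
  (3 <= #|A|)%N -> (p1, p2) <> (0%N, 0%N) ->
  (vertex_magic A (@M5adj p1 p2) <->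
   [/\ (1 <= p1)%N, (1 <= p2)%N & exists g : A, is_square g]).
Proof.
move=> HA Hp; split.
- case=> l [lnz [mu Hmu]].
  have E0 := Hmu (inl o0); have E1 := Hmu (inl o1); have E2 := Hmu (inl o2).
  have E3 := Hmu (inl o3); have E4 := Hmu (inl o4).
  rewrite s0 in E0; rewrite s1 in E1; rewrite s2 in E2; rewrite s3 in E3; rewrite s4 in E4.
  case: p1 Hp l lnz Hmu E0 E1 E2 E3 E4 => [|n1]; case: p2 => [|n2] //.
  + move=> _ l lnz Hmu E0 _ _ _ _.
    have := Hmu (inr (inr ord0)); rewrite sp2 => H1.
    move: E0; rewrite big_ord0 addr0 H1 -{2}[mu]addr0 => /addrI H4.
    by have := lnz (inl o4); rewrite H4 eqxx.
  + move=> _ l lnz Hmu _ E1 _ _ _.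
    have := Hmu (inr (inl ord0)); rewrite sp1 => H0.
    move: E1; rewrite big_ord0 addr0 H0 -{2}[mu]addr0 => /addrI H2.
    by have := lnz (inl o2); rewrite H2 eqxx.
  + move=> _ l lnz Hmu _ _ E2 E3 E4.
    have := Hmu (inr (inl ord0)); rewrite sp1 => H0.
    have := Hmu (inr (inr ord0)); rewrite sp2 => H1.
    move: E2; rewrite H1 -addrA -{2}[mu]addr0 => /addrI /eqP; rewrite addr_eq0 => /eqP H3.
    move: E4; rewrite H0 -addrA -{2}[mu]addr0 => /addrI /eqP; rewrite addr_eq0 H3 opprK => /eqP H2.
    split => //; exists mu; split; first by rewrite -H0 lnz.
    by exists (l (inl o4)); rewrite -E3 H2 mulr2n.
- case=> p1g p2g [g [g0 [h gh]]].
  have h0 : h != 0 by apply: contraNneq g0 => h0; rewrite gh h0 mul0rn.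
  have mh0 : - h != 0 by rewrite oppr_eq0.
  case: p1 Hp p1g => [//|n1] _ _; case: p2 p2g => [//|n2] _.
  have [f1 [f1nz f1s]] := @decomp A HA n1 _ mh0.
  have [f2 [f2nz f2s]] := @decomp A HA n2 _ mh0.
  pose l (v : M5V n1.+1 n2.+1) : A :=
    match v with
    | inl i => match val i with 0 | 1 => g | 2 => h | 3 => - h | _ => h end
    | inr (inl k) => f1 k
    | inr (inr k) => f2 k
    end.
  exists l; split.
    case=> [i|[k|k]] //=; rewrite /l.
    by case: (ord5_cases i) => [->|[->|[->|[->|->]]]].
  exists g; case=> [i|[k|k]].
  + case: (ord5_cases i) => [->|[->|[->|[->|->]]]].
    * by rewrite s0 /= f1s addrK.
    * by rewrite s1 /= f2s addrK.
    * by rewrite s2 /= addrNK.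
    * by rewrite s3 /= -mulr2n.
    * by rewrite s4 /= ?addrK ?addrNK.
  + by rewrite sp1.
  + by rewrite sp2.
Qed.
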